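(* Let $(X,\ll)$ be a past-regular and future-regular chronological set, and let $\eta=\{x_n\}_n$ be a future-directed chain in $X$. Then for every $x\in X$: (a) $x\in \hat L(\eta)$ if and only if $I^-(x)=I^-(\eta)$; (b) $x\in \check L(\eta)$ if and only if $I^+(x)\subset \uparrow\eta$ and $I^+(x)$ is maximal (with respect to inclusion) among the IFs contained in $\uparrow\eta$. Dually, if $\eta$ is a past-directed chain, then $x\in \check L(\eta)$ iff $I^+(x)=I^+(\eta)$, and $x\in\hat L(\eta)$ iff $I^-(x)\subset\downarrow\eta$ and $I^-(x)$ is maximal among the IPs contained in $\downarrow\eta$.
   Context: A chronological set $(X,\ll)$ is a set $X$ with a transitive, anti-reflexive binary relation $\ll$ such that (i) every $x$ satisfies $x\ll y$ or $y\ll x$ for some $y\in X$, and (ii) there is a countable $\mathcal S\subset X$ with: for all $x\ll y$ there is $s\in\mathcal S$ with $x\ll s\ll y$. For $S\subset X$, $I^-(S)=\{y: y\ll x \text{ for some } x\in S\}$, $I^+(S)=\{y: x\ll y \text{ for some } x\in S\}$. A past set is $P\subset X$ with $P=I^-(P)$; an IP (indecomposable past set) is a nonempty past set that cannot be written as the union of two past sets both different from it; future sets and IFs are defined dually. $X$ is past-regular (resp. future-regular) if $I^-(x)$ is an IP (resp. $I^+(x)$ is an IF) for every $x\in X$. A future-directed (resp. past-directed) chain is a sequence $\{x_n\}_n$ with $x_n\ll x_{n+1}$ (resp. $x_{n+1}\ll x_n$) for all $n$; $I^\pm(\eta)$ means $I^\pm$ of the set of its terms. The common future of $S\subset X$ is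 $\uparrow S=I^+(\{y\in X: x\ll y\ \forall x\in S\})$ and the common past is $\downarrow S=I^-(\{y\in X: y\ll x\ \forall x\in S\})$. For a sequence of subsets $A_n$, $LI(\{A_n\})$ is the set of points belonging to $A_n$ for all sufficiently large $n$ and $LS(\{A_n\})$ the set of points belonging to infinitely many $A_n$. For a sequence $\sigma=\{x_n\}_n$ in $X$: $x\in\hat L(\sigma)$ iff $I^-(x)\subset LI(\{I^-(x_n)\})$ and $I^-(x)$ is a maximal IP (w.r.t. inclusion) among IPs contained in $LS(\{I^-(x_n)\})$; dually $x\in\check L(\sigma)$ iff $I^+(x)\subset LI(\{I^+(x_n)\})$ and $I^+(x)$ is a maximal IF among IFs contained in $LS(\{I^+(x_n)\})$. *)

(* Defs.v *)
From Stdlib Require Import Classical.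

Section Chrono.
Context {X : Type}.
Variable rel : X -> X -> Prop.   (* x << y  is  rel x y *)

Definition set_incl (A B : X -> Prop) : Prop := forall x, A x -> B x.
Definition set_eq (A B : X -> Prop) : Prop := forall x, A x <-> B x.

Definition countable_set (S : X -> Prop) : Prop :=
  exists g : X -> nat, forall x y, S x -> S y -> g x = g y -> x = y.

Definition chronological : Prop :=
  (forall x y z, rel x y -> rel y z -> rel x z) /\
  (forall x, ~ rel x x) /\
  (forall x, exists y, rel x y \/ rel y x) /\
  (exists S : X -> Prop, countable_set S /\
     forall x y, rel x y -> exists s, S s /\ rel x s /\ rel s y).

Definition Ipast (S : X -> Prop) : X -> Prop := fun y => exists x, S x /\ rel y x.
Definition Ifut (S : X -> Prop) : X -> Prop := fun y => exists x, S x /\ rel x y.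
Definition Ipast_pt (x : X) : X -> Prop := fun y => rel y x.
Definition Ifut_pt (x : X) : X -> Prop := fun y => rel x y.

Definition past_set (P : X -> Prop) : Prop := set_eq P (Ipast P).
Definition future_set (F : X -> Prop) : Prop := set_eq F (Ifut F).

Definition IP (P : X -> Prop) : Prop :=
  (exists x, P x) /\ past_set P /\
  ~ (exists A B, past_set A /\ past_set B /\ ~ set_eq A P /\ ~ set_eq B P /\
        set_eq P (fun z => A z \/ B z)).
Definition IF (F : X -> Prop) : Prop :=
  (exists x, F x) /\ future_set F /\
  ~ (exists A B, future_set A /\ future_set B /\ ~ set_eq A F /\ ~ set_eq B F /\
        set_eq F (fun z => A z \/ B z)).

Definition past_regular : Prop := forall x, IP (Ipast_pt x).
Definition future_regular : Prop := forall x, IF (Ifut_pt x).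

Definition fut_chain (s : nat -> X) : Prop := forall n, rel (s n) (s (S n)).
Definition past_chain (s : nat -> X) : Prop := forall n, rel (s (S n)) (s n).

Definition range (s : nat -> X) : X -> Prop := fun x => exists n, s n = x.

Definition common_future (S : X -> Prop) : X -> Prop :=
  Ifut (fun y => forall x, S x -> rel x y).
Definition common_past (S : X -> Prop) : X -> Prop :=
  Ipast (fun y => forall x, S x -> rel y x).

Definition LI (A : nat -> X -> Prop) : X -> Prop :=
  fun x => exists N, forall n, N <= n -> A n x.
Definition LS (A : nat -> X -> Prop) : X -> Prop :=
  fun x => forall N, exists n, N <= n /\ A n x.

Definition maximal_IP_in (P A : X -> Prop) : Prop :=
  IP P /\ set_incl P A /\
  forall Q, IP Q -> set_incl Q A -> set_incl P Q -> set_eq Q P.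
Definition maximal_IF_in (F A : X -> Prop) : Prop :=
  IF F /\ set_incl F A /\
  forall Q, IF Q -> set_incl Q A -> set_incl F Q -> set_eq Q F.

Definition Lhat (s : nat -> X) (x : X) : Prop :=
  set_incl (Ipast_pt x) (LI (fun n => Ipast_pt (s n))) /\
  maximal_IP_in (Ipast_pt x) (LS (fun n => Ipast_pt (s n))).
Definition Lcheck (s : nat -> X) (x : X) : Prop :=
  set_incl (Ifut_pt x) (LI (fun n => Ifut_pt (s n))) /\
  maximal_IF_in (Ifut_pt x) (LS (fun n => Ifut_pt (s n))).

End Chrono.

(* Main.v *)
Require Import Defs.
From Stdlib Require Import Classical Arith Lia.

Section G.
Context {X : Type} (rel : X -> X -> Prop).
Hypothesis tr : forall x y z, rel x y -> rel y z -> rel x z.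

Lemma chain_lt (eta : nat -> X) : fut_chain rel eta ->
  forall n m, n < m -> rel (eta n) (eta m).
Proof.
  intros H n m Hnm. induction Hnm.
  - apply H.
  - eapply tr; [exact IHHnm| apply H].
Qed.

Lemma chain_IP (eta : nat -> X) : fut_chain rel eta -> IP rel (Ipast rel (range eta)).
Proof.
  intros Hc. split; [|split].
  - exists (eta 0). exists (eta 1). split; [exists 1; auto| apply Hc].
  - intro y. split.
    + intros [z [[n <-] Hy]]. exists (eta n). split.
      * exists (eta (S n)). split; [exists (S n); auto| apply Hc].
      * exact Hy.
    + intros [z [[w [[n <-] Hz]] Hy]]. exists (eta n). split; [exists n; auto| eapply tr; eauto].
  - intros [A [B [HA [HB [nA [nB Heq]]]]]].
    assert (Hin : forall n, A (eta n) \/ B (eta n)).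
    { intro n. apply Heq. exists (eta (S n)). split; [exists (S n); auto| apply Hc]. }
    assert (Hall : forall (C : X -> Prop), past_set rel C ->
              (forall N, exists m, N <= m /\ C (eta m)) ->
              set_eq (Ipast rel (range eta)) (fun z => A z \/ B z) ->
              set_incl (Ipast rel (range eta)) C).
    { intros C HC Hinf _ y [z [[n <-] Hy]].
      destruct (Hinf (S n)) as [m [Hm Cm]].
      apply HC. exists (eta m). split; auto. eapply tr; [exact Hy| apply chain_lt; auto; lia]. }
    destruct (classic (forall N, exists m, N <= m /\ A (eta m))) as [HiA|HnA].
    + apply nA. intro y. split.
      * intro Ay. apply Heq. auto.
      * apply (Hall A HA HiA Heq).
    + apply nB. intro y. split.
      * intro By. apply Heq. auto.
      * apply (Hall B HB); auto.
        apply not_all_ex_not in HnA. destruct HnA as [N0 HN0].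
        intro N. exists (N + N0). split; [lia|].
        destruct (Hin (N + N0)) as [Ha|Hb]; auto.
        exfalso. apply HN0. exists (N+N0). split; [lia| auto].
Qed.

Lemma fut_part : past_regular rel -> future_regular rel ->
  (forall eta : nat -> X, fut_chain rel eta -> forall x : X,
     (Lhat rel eta x <-> set_eq (Ipast_pt rel x) (Ipast rel (range eta))) /\
     (Lcheck rel eta x <-> maximal_IF_in rel (Ifut_pt rel x) (common_future rel (range eta)))).
Proof.
  intros Pr Fr eta Hc x.
  assert (LSp : forall y, LS (fun n => Ipast_pt rel (eta n)) y <-> Ipast rel (range eta) y).
  { intro y. split.
    - intros H. destruct (H 0) as [n [_ Hn]]. exists (eta n). split; [exists n|]; auto.
    - intros [z [[n <-] Hy]] N. exists (S (N + n)). split; [lia|].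
      eapply tr; [exact Hy| apply chain_lt; auto; lia]. }
  assert (LIp : forall y, Ipast rel (range eta) y -> LI (fun n => Ipast_pt rel (eta n)) y).
  { intros y [z [[n <-] Hy]]. exists (S n). intros m Hm.
    eapply tr; [exact Hy| apply chain_lt; auto; lia]. }
  assert (LSf : forall y, LS (fun n => Ifut_pt rel (eta n)) y -> forall n, rel (eta n) y).
  { intros y H n. destruct (H (S n)) as [m [Hm Hy]].
    apply (tr _ (eta m)); [apply chain_lt; auto; lia| exact Hy]. }
  assert (CF1 : forall y, common_future rel (range eta) y -> forall n, rel (eta n) y).
  { intros y [w [Hw Hy]] n. eapply tr; [apply Hw; exists n; auto| exact Hy]. }
  assert (CF2 : forall Q, IF rel Q -> set_incl Q (LS (fun n => Ifut_pt rel (eta n))) ->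
             set_incl Q (common_future rel (range eta))).
  { intros Q [_ [HQ _]] Hs y Qy. apply HQ in Qy. destruct Qy as [w [Qw Hw]].
    exists w. split; auto. intros z [n <-]. apply (LSf w (Hs w Qw) n). }
  split; split.
  - intros [HLI [HIP [Hs Hm]]]. intro y. split.
    + intro Hy. apply LSp. auto.
    + intro Hy. apply (Hm (Ipast rel (range eta))); auto.
      * apply chain_IP; auto.
      * intros z Hz; apply LSp; auto.
      * intros z Hz; apply LSp; apply Hs; auto.
  - intros Heq. split; [|split; [|split]].
    + intros y Hy. apply LIp, Heq, Hy.
    + apply Pr.
    + intros y Hy. apply LSp, Heq, Hy.
    + intros Q HQ Hs Hi y. split; auto.
      intros Qy. apply Heq, LSp, Hs, Qy.
  - intros [HLI [HIF [Hs Hm]]]. split; [exact HIF| split].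
    + apply CF2; auto.
    + intros Q HQ Hq Hi. apply Hm; auto.
      intros y Qy N. exists N. split; auto. apply CF1. apply Hq; auto.
  - intros [HIF [Hs Hm]]. split; [|split; [exact HIF|split]].
    + intros y Hy. exists 0. intros n _. apply CF1, Hs, Hy.
    + intros y Hy N. exists N. split; auto. apply CF1, Hs, Hy.
    + intros Q HQ Hq Hi. apply Hm; auto; apply CF2; auto.
Qed.
End G.

Theorem mainTheorem1 (X : Type) (rel : X -> X -> Prop) :
  chronological rel -> past_regular rel -> future_regular rel ->
  (forall eta : nat -> X, fut_chain rel eta -> forall x : X,
     (Lhat rel eta x <-> set_eq (Ipast_pt rel x) (Ipast rel (range eta))) /\
     (Lcheck rel eta x <-> maximal_IF_in rel (Ifut_pt rel x) (common_future rel (range eta))))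
  /\
  (forall eta : nat -> X, past_chain rel eta -> forall x : X,
     (Lcheck rel eta x <-> set_eq (Ifut_pt rel x) (Ifut rel (range eta))) /\
     (Lhat rel eta x <-> maximal_IP_in rel (Ipast_pt rel x) (common_past rel (range eta)))).
Proof.
  intros [tr _] Pr Fr. split.
  - apply fut_part; auto.
  - intros eta Hc x.
    exact (@fut_part X (fun a b => rel b a) (fun x y z H1 H2 => tr z y x H2 H1) Fr Pr eta Hc x).
Qed.
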